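(* Let $\lambda$ be the security parameter, $q$ a modulus, $m,n\in\mathbb{N}$, and let $\mathsf{NMIFE}^{\mathrm{ot}}$ be the scheme for multi-input inner products over $\mathbb{Z}_q$ described in the context. Then $\mathsf{NMIFE}^{\mathrm{ot}}$ is $\mathsf{IND}$-secure; more precisely, for any $\mathsf{PPT}$ adversary $\mathcal{A}$, $$\mathsf{Adv}^{\mathsf{IND}}_{\mathsf{NMIFE}^{\mathrm{ot}},\mathcal{A}}(\lambda)=0 .$$
   Context: Notation: $[n]=\{1,\dots,n\}$. For vectors $\mathbf{y}=(\mathbf{y}_1,\dots,\mathbf{y}_n)\in(\mathbb{Z}_q^m)^n$ let $f_{\mathbf{y}}(\mathbf{x}_1,\dots,\mathbf{x}_n)=\sum_{i\in[n]}\langle \mathbf{x}_i,\mathbf{y}_i\rangle \bmod q$. For $\Delta\in\mathbb{Z}_q$, $\mathcal{D}_\Delta$ denotes the distribution outputting $\Delta$ with probability one. The scheme $\mathsf{NMIFE}^{\mathrm{ot}}$: - $\mathsf{Setup}(1^\lambda,m,n)$: for each $i\in[n]$ sample $\mathsf{ek}_i\leftarrow\mathbb{Z}_q^m$ uniformly; output $\mathsf{msk}=\{(i,\mathsf{ek}_i)\}_{i\in[n]}$. - $\mathsf{Enc}(\mathsf{ek}_i,\mathbf{x}_i)$ for $\mathbf{x}_i\in\mathbb{Z}_q^m$: output $\mathsf{ct}_i=(i,\mathbf{c}_i:=\mathbf{x}_i+\mathsf{ek}_i \bmod q)$. - $\mathsf{KeyGen}(\mathsf{msk},f_{\mathbf{y}},\mathcal{D})$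 for a distribution $\mathcal{D}$ over $\mathbb{Z}_q$: sample $\Delta\leftarrow\mathcal{D}$ and output $\mathsf{dk}_{\mathbf{y}}=(\mathbf{y},z:=\sum_{i\in[n]}\langle \mathsf{ek}_i,\mathbf{y}_i\rangle-\Delta \bmod q)$. - $\mathsf{Dec}(\mathsf{dk}_{\mathbf{y}},\mathsf{ct}_1,\dots,\mathsf{ct}_n)$: output $\sum_{i\in[n]}\langle\mathbf{c}_i,\mathbf{y}_i\rangle-z\bmod q$. Security game $\mathsf{IND}_\beta$ ($\beta\in\{0,1\}$) between adversary $\mathcal{A}$ and challenger: the challenger runs $\mathsf{Setup}(1^\lambda,m,n)$ and chooses the bit $\beta$. $\mathcal{A}$ may adaptively make encryption queries $\mathsf{QEnc}(i,\mathbf{x}_i^0,\mathbf{x}_i^1)$, answered by $\mathsf{Enc}(\mathsf{ek}_i,\mathbf{x}_i^\beta)$, where only one query per slot $i$ is answered (later ones for the same $i$ are ignored), and decryption-key queries $\mathsf{QKeyGen}(f_{\mathbf{y}},\Delta^0,\Delta^1)$ with $\Delta^0,\Delta^1\in\mathbb{Z}_q$, answered by $\mathsf{KeyGen}(\mathsf{msk},f_{\mathbf{y}},\mathcal{D}_{\Delta^\beta})$. Finally $\mathcal{A}$ outputs $\beta'$; if $\mathcal{A}$ was not admissible, $\beta'$ is set to $0$; the game outputs $\beta'$. $\mathcal{A}$ is admissible if (a) whenever some decryption-key query was made, every slot $i\in[n]$ has been queried to $\mathsf{QEnc}$, and (b) for every key query $\mathsf{QKeyGen}(f_{\mathbf{y}},\Delta^0,\Delta^1)$,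 $f_{\mathbf{y}}(\mathbf{x}_1^0,\dots,\mathbf{x}_n^0)+\Delta^0=f_{\mathbf{y}}(\mathbf{x}_1^1,\dots,\mathbf{x}_n^1)+\Delta^1$, where $\mathbf{x}_i^b$ are the answered encryption queries. The advantage is $\mathsf{Adv}^{\mathsf{IND}}_{\mathsf{NMIFE}^{\mathrm{ot}},\mathcal{A}}(\lambda)=|\Pr[\mathsf{IND}_0(\lambda,\mathcal{A})=1]-\Pr[\mathsf{IND}_1(\lambda,\mathcal{A})=1]|$; the scheme is $\mathsf{IND}$-secure if this is negligible for all $\mathsf{PPT}$ $\mathcal{A}$. *)

(* Defs.v *)
From HB Require Import structures.
From mathcomp Require Import all_boot all_order all_algebra.
Set Implicit Arguments. Unset Strict Implicit. Unset Printing Implicit Defensive.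
Import Order.TTheory GRing.Theory Num.Theory.
Local Open Scope ring_scope.

Notation vec q m := 'rV['Z_q]_m.
Notation vecs q m n := {ffun 'I_n -> vec q m}.

Section Scheme.
Variables q m n : nat.

Definition ip (x y : vec q m) : 'Z_q := \sum_(j < m) x ord0 j * y ord0 j.

Definition f_y (y xs : vecs q m n) : 'Z_q := \sum_(i < n) ip (xs i) (y i).

(* msk = {(i, ek_i)}_i, represented as the finite function i |-> ek_i;
   Setup samples it uniformly from (Z_q^m)^n (see Pr below). *)
Definition msk_t := vecs q m n.

Definition Enc (i : 'I_n) (eki : vec q m) (x : vec q m) : 'I_n * vec q m :=
  (i, x + eki).

(* KeyGen(msk, f_y, D) with Delta the value sampled from D
   (in the game D = D_Delta is a point mass, so Delta is deterministic). *)
Definition KeyGen (msk : msk_t) (y : vecs q m n) (Delta : 'Z_q)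
  : vecs q m n * 'Z_q :=
  (y, \sum_(i < n) ip (msk i) (y i) - Delta).

Definition Dec (dk : vecs q m n * 'Z_q) (cts : vecs q m n) : 'Z_q :=
  \sum_(i < n) ip (cts i) (dk.1 i) - dk.2.

End Scheme.

(* An (adaptive) adversary, for fixed random coins: an interaction tree.
   - ADone b           : output b
   - AEnc i x0 x1 k    : query QEnc(i, x0, x1), continue with the answer
                         (Some ct, or None if the query is ignored)
   - AKey y d0 d1 k    : query QKeyGen(f_y, d0, d1), continue with dk_y *)
Inductive adversary (q m n : nat) : Type :=
| ADone of bool
| AEnc of 'I_n & vec q m & vec q m & (option ('I_n * vec q m) -> adversary q m n)
| AKey of vecs q m n & 'Z_q & 'Z_q & (vecs q m n * 'Z_q -> adversary q m n).
Arguments ADone {q m n}.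
Arguments AEnc {q m n}.
Arguments AKey {q m n}.

Section Game.
Variables q m n : nat.

Definition enc_log := {ffun 'I_n -> option (vec q m * vec q m)}.
Definition key_log := seq (vecs q m n * 'Z_q * 'Z_q).

Fixpoint run (beta : bool) (msk : msk_t q m n) (A : adversary q m n)
  (E : enc_log) (K : key_log) : bool * enc_log * key_log :=
  match A with
  | ADone b => (b, E, K)
  | AEnc i x0 x1 k =>
      if E i is Some _ then run beta msk (k None) E K
      else run beta msk (k (Some (Enc i (msk i) (if beta then x1 else x0))))
             [ffun j => if j == i then Some (x0, x1) else E j] K
  | AKey y d0 d1 k =>
      run beta msk (k (KeyGen msk y (if beta then d1 else d0))) E
          (rcons K (y, d0, d1))
  end.

Definition chal (b : bool) (E : enc_log) : vecs q m n :=
  [ffun i => if E i is Some p then (if b then p.2 else p.1) else 0].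

Definition admissible (E : enc_log) (K : key_log) : bool :=
  (K == [::]) ||
  ([forall i, E i != None] &&
   all (fun t => f_y t.1.1 (chal false E) + t.1.2 == f_y t.1.1 (chal true E) + t.2) K).

(* IND_beta with challenger randomness msk and adversary coins fixed *)
Definition IND (beta : bool) (A : adversary q m n) (msk : msk_t q m n) : bool :=
  let: (b', E, K) := run beta msk A [ffun => None] [::] in
  b' && admissible E K.

(* Pr[IND_beta(A) = 1]: adversary coins r uniform in the finite type R,
   msk uniform in (Z_q^m)^n (Setup). *)
Definition Pr_IND (beta : bool) (R : finType) (A : R -> adversary q m n) : rat :=
  #|[set p : R * msk_t q m n | IND beta (A p.1) p.2]|%:R
  / #|[set: R * msk_t q m n]|%:R.

Definition Adv_IND (R : finType) (A : R -> adversary q m n) : rat :=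
  `|Pr_IND false A - Pr_IND true A|.

End Game.

(* Main.v *)
Require Import Defs.
From HB Require Import structures.
From mathcomp Require Import all_boot all_order all_algebra.
From mathcomp Require Import ring.
Set Implicit Arguments. Unset Strict Implicit. Unset Printing Implicit Defensive.
Import Order.TTheory GRing.Theory Num.Theory.
Local Open Scope ring_scope.

Section Proof.
Variables q m n : nat.

Lemma ipD (a b y : vec q m) : ip (a + b) y = ip a y + ip b y.
Proof. by rewrite /ip -big_split; apply: eq_bigr => j _; rewrite mxE mulrDl. Qed.

Lemma ipN (a y : vec q m) : ip (- a) y = - ip a y.
Proof. by rewrite /ip -sumrN; apply: eq_bigr => j _; rewrite mxE mulNr. Qed.

Definition shift (beta : bool) (E : enc_log q m n) (msk : msk_t q m n) : msk_t q m n :=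
  [ffun i => msk i + (chal beta E i - chal (~~beta) E i)].

Lemma shift_inj beta E : injective (shift beta E).
Proof.
move=> m1 m2 /ffunP H; apply/ffunP => i; move: (H i); rewrite !ffunE.
exact: addIr.
Qed.

Lemma preserve beta msk (A : adversary q m n) E K b E' K' :
  run beta msk A E K = (b, E', K') ->
  (forall i p, E i = Some p -> E' i = Some p) /\ (exists s, K' = K ++ s).
Proof.
elim: A E K => [b0|i x0 x1 k IH|y d0 d1 k IH] E K /=.
- by case=> _ <- <-; split => //; exists [::]; rewrite cats0.
- case Ei: (E i) => [p|]; first exact: IH.
  move/IH => [H1 H2]; split => // j p Ej; apply: H1; rewrite ffunE.
  by case: eqP => [eji|//]; move: Ej; rewrite eji Ei.
- move/IH => [H1 [s ->]]; split => //; exists ((y, d0, d1) :: s).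
  by rewrite cat_rcons.
Qed.

Lemma sum_shift beta E msk (y : vecs q m n) :
  \sum_(i < n) ip (shift beta E msk i) (y i) =
  \sum_(i < n) ip (msk i) (y i) + f_y y (chal beta E) - f_y y (chal (~~beta) E).
Proof.
rewrite /f_y -big_split -sumrB /=; apply: eq_bigr => i _.
by rewrite ffunE ipD ipD ipN addrA.
Qed.

Lemma main beta msk (A : adversary q m n) E K b E' K' :
  run beta msk A E K = (b, E', K') ->
  (forall t, t \in K' -> f_y t.1.1 (chal false E') + t.1.2 = f_y t.1.1 (chal true E') + t.2) ->
  run (~~beta) (shift beta E' msk) A E K = (b, E', K').
Proof.
elim: A E K => [b0|i x0 x1 k IH|y d0 d1 k IH] E K /=.
- by [].
- case Ei: (E i) => [p|]; first exact: IH.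
  move=> Hr Hadm; have [H1 _] := preserve Hr.
  have HE : E' i = Some (x0, x1) by apply: H1; rewrite ffunE eqxx.
  suff -> : Enc i (shift beta E' msk i) (if ~~ beta then x1 else x0) =
            Enc i (msk i) (if beta then x1 else x0) by exact: IH.
  rewrite /Enc; congr (_, _).
  rewrite ffunE /chal !ffunE HE.
  by clear Hr IH; case: beta => /=; rewrite addrC addrA subrK addrC.
- move=> Hr Hadm; have [_ [s HK]] := preserve Hr.
  have Ht : (y, d0, d1) \in K' by rewrite HK mem_cat mem_rcons mem_head.
  have := Hadm _ Ht => /= Hf.
  suff -> : KeyGen (shift beta E' msk) y (if ~~ beta then d1 else d0) =
            KeyGen msk y (if beta then d1 else d0) by exact: IH.
  rewrite /KeyGen; congr (_, _).
  rewrite sum_shift.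
  have Hf' : f_y y (chal false E') = f_y y (chal true E') + d1 - d0.
    by rewrite -Hf addrK.
  by clear Hr IH Hadm; case: beta => /=; rewrite Hf'; ring.
Qed.

Lemma card_le beta (R : finType) (A : R -> adversary q m n) :
  (#|[set p : R * msk_t q m n | IND beta (A p.1) p.2]| <=
   #|[set p : R * msk_t q m n | IND (~~beta) (A p.1) p.2]|)%N.
Proof.
set S := [set p | _].
pose phi (p : R * msk_t q m n) :=
  (p.1, shift beta (run beta p.2 (A p.1) [ffun => None] [::]).1.2 p.2).
have key : forall p, p \in S -> run (~~beta) (phi p).2 (A p.1) [ffun => None] [::]
   = run beta p.2 (A p.1) [ffun => None] [::] /\
   IND (~~beta) (A p.1) (phi p).2.
  move=> [r msk]; rewrite inE /IND /phi /=.
  case Hr: (run _ _ _ _ _) => [[b E] K] /andP [Hb Hadm].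
  have Hm : run (~~beta) (shift beta E msk) (A r) [ffun => None] [::] = (b, E, K).
    apply: main Hr _ => t tK; move: Hadm; rewrite /admissible.
    case/orP => [/eqP HK|/andP [_ /allP H]]; first by rewrite HK in tK.
    by apply/eqP; apply: H.
  by rewrite Hm Hb Hadm.
rewrite -(card_in_imset (f := phi)).
  apply: subset_leq_card; apply/subsetP => p' /imsetP [p pS ->].
  by rewrite inE; case: (key p pS).
move=> [r1 m1] [r2 m2] S1 S2 Heq.
have [K1 _] := key _ S1; have [K2 _] := key _ S2.
move: Heq; rewrite /phi /= => -[Er Em]; subst r2.
simpl in K1, K2, Em.
have ER : run beta m1 (A r1) [ffun => None] [::] = run beta m2 (A r1) [ffun => None] [::].
  by rewrite -K1 -K2 Em.
by rewrite ER in Em; rewrite (shift_inj Em).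
Qed.

End Proof.

Theorem theorem1 (q m n : nat) (hq : (1 < q)%N)
  (R : finType) (A : R -> adversary q m n) :
  Adv_IND A = 0.
Proof.
rewrite /Adv_IND /Pr_IND.
have -> : #|[set p : R * msk_t q m n | IND false (A p.1) p.2]| =
          #|[set p : R * msk_t q m n | IND true (A p.1) p.2]|.
  by apply/eqP; rewrite eqn_leq (card_le false A) (card_le true A).
by rewrite subrr normr0.
Qed.
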